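(* The functor $\partial\mathrm{Spec}\colon \mathsf{Ring}^{\mathrm{op}}\to\mathsf{Set}$, together with the identity natural transformation $\partial\mathrm{Spec}|_{\mathsf{CommRing}^{\mathrm{op}}}\to\operatorname{Spec}$, is the right Kan extension of $\operatorname{Spec}\colon\mathsf{CommRing}^{\mathrm{op}}\to\mathsf{Set}$ along the inclusion $\mathsf{CommRing}^{\mathrm{op}}\subseteq\mathsf{Ring}^{\mathrm{op}}$. That is, for every functor $F\colon\mathsf{Ring}^{\mathrm{op}}\to\mathsf{Set}$ and every natural transformation $\eta\colon F|_{\mathsf{CommRing}^{\mathrm{op}}}\to\operatorname{Spec}$ there is a unique natural transformation $\delta\colon F\to\partial\mathrm{Spec}$ whose restriction to $\mathsf{CommRing}^{\mathrm{op}}$ equals $\eta$. In particular, $\partial\mathrm{Spec}$ (with the identity isomorphism $\partial\mathrm{Spec}|_{\mathsf{CommRing}^{\mathrm{op}}}=\operatorname{Spec}$) is a terminal object of the category $r^{-1}(\operatorname{Spec})$.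
   Context: Rings are unital and homomorphisms unital. For a ring $R$, a subset $I\subseteq R$ is a partial ideal if for all commuting $a,b\in R$ (i.e. $ab=ba$): $a,b\in I\Rightarrow a+b\in I$, and $b\in I\Rightarrow ab\in I$. A partial ideal $P$ is prime if $P\neq R$ and for all commuting $x,y\in R$, $xy\in P$ implies $x\in P$ or $y\in P$. $\partial\mathrm{Spec}(R)$ is the set of prime partial ideals of $R$, and for a ring homomorphism $f\colon R\to S$, $\partial\mathrm{Spec}(f)\colon\partial\mathrm{Spec}(S)\to\partial\mathrm{Spec}(R)$ is $P\mapsto f^{-1}(P)$; on commutative rings $\partial\mathrm{Spec}$ coincides with $\operatorname{Spec}$ (prime ideals, preimage maps). The category $r^{-1}(\operatorname{Spec})$ has as objects pairs $(F,\phi)$ with $F\colon\mathsf{Ring}^{\mathrm{op}}\to\mathsf{Set}$ a functor and $\phi\colon F|_{\mathsf{CommRing}^{\mathrm{op}}}\to\operatorname{Spec}$ a natural isomorphism; a morphism $(F,\phi)\to(F',\phi')$ is a natural transformation $\psi\colon F\to F'$ with $\phi'\circ\psi|_{\mathsf{CommRing}^{\mathrm{op}}}=\phi$. *)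

(* Defs.v *)
From HB Require Import structures.
From mathcomp Require Import all_boot all_algebra.
Set Implicit Arguments. Unset Strict Implicit. Unset Printing Implicit Defensive.
Import GRing.Theory.
Local Open Scope ring_scope.

(* Rings = unital, possibly zero rings (pzRingType); homomorphisms = unital
   ring morphisms {rmorphism R -> S}; commutative rings = comPzRingType. *)

Definition partial_ideal (R : pzRingType) (I : R -> Prop) : Prop :=
  I 0 /\
  (forall a b : R, GRing.comm a b -> I a -> I b -> I (a + b)) /\
  (forall a b : R, GRing.comm a b -> I b -> I (a * b)).

Definition prime_partial_ideal (R : pzRingType) (P : R -> Prop) : Prop :=
  partial_ideal P /\ (exists r : R, ~ P r) /\
  (forall x y : R, GRing.comm x y -> P (x * y) -> P x \/ P y).

Definition dSpec (R : pzRingType) := {P : R -> Prop | prime_partial_ideal P}.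

Definition prime_ideal (R : comPzRingType) (P : R -> Prop) : Prop :=
  P 0 /\ (forall a b : R, P a -> P b -> P (a + b)) /\
  (forall a b : R, P b -> P (a * b)) /\ (exists r : R, ~ P r) /\
  (forall x y : R, P (x * y) -> P x \/ P y).

Definition Spec (R : comPzRingType) := {P : R -> Prop | prime_ideal P}.

Definition preim_set (R S : pzRingType) (f : {rmorphism R -> S}) (P : S -> Prop)
  : R -> Prop := fun r => P (f r).

(* A functor Ring^op -> Set (sets modelled as types). *)
Record RingPsh := {
  Fobj : pzRingType -> Type;
  Fmap : forall R S : pzRingType, {rmorphism R -> S} -> Fobj S -> Fobj R;
  Fmap_id : forall (R : pzRingType) (i : {rmorphism R -> R}),
      (forall r, i r = r) -> forall y, Fmap i y = y;
  Fmap_comp : forall (R S T : pzRingType) (f : {rmorphism R -> S})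
      (g : {rmorphism S -> T}) (h : {rmorphism R -> T}),
      (forall r, h r = g (f r)) -> forall y, Fmap h y = Fmap f (Fmap g y)
}.

(* Natural transformations F|_{CommRing^op} -> Spec
   (naturality: Spec(f) is preimage along f). *)
Definition nat_to_Spec (F : RingPsh)
  (eta : forall R : comPzRingType, Fobj F R -> Spec R) : Prop :=
  forall (R S : comPzRingType) (f : {rmorphism R -> S}) (y : Fobj F S),
    proj1_sig (eta R (@Fmap F _ _ f y)) = preim_set f (proj1_sig (eta S y)).

(* Natural transformations F -> dSpec (dSpec(f) is preimage along f). *)
Definition nat_to_dSpec (F : RingPsh)
  (delta : forall R : pzRingType, Fobj F R -> dSpec R) : Prop :=
  forall (R S : pzRingType) (f : {rmorphism R -> S}) (y : Fobj F S),
    proj1_sig (delta R (@Fmap F _ _ f y)) = preim_set f (proj1_sig (delta S y)).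

(* delta restricted to CommRing^op, composed with the identity dSpec|Comm = Spec,
   equals eta (comparison of the underlying subsets). *)
Definition restricts_to (F : RingPsh)
  (delta : forall R : pzRingType, Fobj F R -> dSpec R)
  (eta : forall R : comPzRingType, Fobj F R -> Spec R) : Prop :=
  forall (R : comPzRingType) (y : Fobj F R),
    proj1_sig (delta R y) = proj1_sig (eta R y).

(* Main.v *)
From HB Require Import structures.
Require Import Defs.
From mathcomp Require Import all_boot all_algebra.
Set Implicit Arguments. Unset Strict Implicit. Unset Printing Implicit Defensive.
Import GRing.Theory.
Local Open Scope ring_scope.

Section Ext.
Variable R : pzRingType.
Definition ext := (R * int)%type.
HB.instance Definition _ := GRing.PzRing.on ext.
Fact ext_one_neq0 : (1 : ext) != 0.
Proof. by rewrite xpair_eqE oner_eq0 andbF. Qed.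
HB.instance Definition _ := GRing.PzSemiRing_isNonZero.Build ext ext_one_neq0.

Lemma comm_ext (a : R) : commr_rmorph (intr : int -> ext) (a, 0%R).
Proof. move=> n; apply: commr_int. Qed.

Definition ev1 (a : R) (p : {poly int}) : R := (horner_morph (comm_ext a) p).1.

Fact ev1_zmod a : zmod_morphism (ev1 a).
Proof. by move=> p q; rewrite /ev1 rmorphB. Qed.
HB.instance Definition _ a := GRing.isZmodMorphism.Build {poly int} R (ev1 a) (ev1_zmod a).
Fact ev1_monoid a : monoid_morphism (ev1 a).
Proof. by split => [|p q]; rewrite /ev1 ?rmorph1 ?rmorphM. Qed.
HB.instance Definition _ a := GRing.isMonoidMorphism.Build {poly int} R (ev1 a) (ev1_monoid a).

Lemma ev1X a : ev1 a 'X = a.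
Proof. by rewrite /ev1 horner_morphX. Qed.

Lemma comm_ev1 (a b : R) : GRing.comm a b ->
  commr_rmorph (horner_morph (comm_ext a)) (b, 0%R).
Proof.
move=> hab p; elim/poly_ind: p => [|p c IH].
  by rewrite rmorph0; apply: commr0.
rewrite rmorphD rmorphM /=.
have -> : horner_morph (comm_ext a) 'X = (a, 0%R) by exact: (horner_morphX (comm_ext a)).
have -> : horner_morph (comm_ext a) c%:P = c%:~R by rewrite horner_morphC.
apply: commrD; last exact: commr_int.
apply: commrM => //.
by rewrite /GRing.comm /=; congr (_, _) => //=; rewrite mulr0 mul0r.
Qed.

Definition ev2 (a b : R) (hab : GRing.comm a b) (p : {poly {poly int}}) : R :=
  (horner_morph (comm_ev1 hab) p).1.

Fact ev2_zmod a b hab : zmod_morphism (@ev2 a b hab).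
Proof. by move=> p q; rewrite /ev2 rmorphB. Qed.
HB.instance Definition _ a b hab := GRing.isZmodMorphism.Build {poly {poly int}} R (@ev2 a b hab) (ev2_zmod hab).
Fact ev2_monoid a b hab : monoid_morphism (@ev2 a b hab).
Proof. by split => [|p q]; rewrite /ev2 ?rmorph1 ?rmorphM. Qed.
HB.instance Definition _ a b hab := GRing.isMonoidMorphism.Build {poly {poly int}} R (@ev2 a b hab) (ev2_monoid hab).

Lemma ev2X a b hab : @ev2 a b hab 'X = b.
Proof. by rewrite /ev2 horner_morphX. Qed.
Lemma ev2XC a b hab : @ev2 a b hab ('X%:P) = a.
Proof. rewrite /ev2 horner_morphC /=. exact: (congr1 fst (horner_morphX (comm_ext a))). Qed.

End Ext.

Lemma poly_uniq (S : pzRingType) (f g : {rmorphism {poly int} -> S}) :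
  f 'X = g 'X -> forall p, f p = g p.
Proof.
move=> hX; apply: poly_ind => [|p c IH]; first by rewrite !rmorph0.
rewrite !rmorphD !rmorphM IH hX; congr (_ + _).
have -> : c%:P = c%:~R :> {poly int} by rewrite -{1}[c]intz rmorph_int.
by rewrite !rmorph_int.
Qed.

From Stdlib Require Import FunctionalExtensionality PropExtensionality ProofIrrelevance.

Section Main.
Variable F : RingPsh.
Variable eta : forall R : comPzRingType, Fobj F R -> Spec R.
Hypothesis Heta : nat_to_Spec eta.

Definition PI := ({poly int} : comPzRingType).

Definition Pset (R : pzRingType) (y : Fobj F R) : R -> Prop :=
  fun a => proj1_sig (@eta PI (@Fmap F _ _ (ev1 a) y)) 'X.

Lemma key (R : pzRingType) (C : comPzRingType) (g : {rmorphism C -> R}) (c : C)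
  (y : Fobj F R) : Pset y (g c) <-> proj1_sig (@eta C (@Fmap F _ _ g y)) c.
Proof.
rewrite /Pset.
have E : forall p, ev1 (g c) p = g (ev1 c p).
  apply: (@poly_uniq R (ev1 (g c)) (g \o ev1 c)).
  by rewrite /= !ev1X.
rewrite (Fmap_comp (f := ev1 c) (g := g) (h := ev1 (g c)) E).
rewrite (Heta (R := PI) (S := C) (ev1 c)) /preim_set.
have H : ev1 c 'X = c := ev1X c.
by rewrite -[X in _ <-> sval _ X]H.

Qed.

Lemma Pset_prime (R : pzRingType) (y : Fobj F R) : prime_partial_ideal (Pset y).
Proof.
have K0 c := key (C := PI) (ev1 (0 : R)) c y.
case: (svalP (@eta PI (@Fmap F _ _ (ev1 (0:R)) y))) => Q0 [_ [QM0 [[r nr] _]]].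
split; [split; [|split] | split].
- have e : ev1 (0:R) 0 = 0 by rewrite rmorph0.
  by rewrite -e; apply/K0.
- move=> a b hab Pa Pb.
  have K c := key (C := ({poly {poly int}} : comPzRingType)) (ev2 hab) c y.
  case: (svalP (@eta _ (@Fmap F _ _ (ev2 hab) y))) => _ [QD _].
  have ea : ev2 hab ('X%:P) = a by exact: ev2XC.
  have eb : ev2 hab 'X = b by exact: ev2X.
  have e : ev2 hab ('X%:P + 'X) = a + b by rewrite rmorphD; congr (_ + _); [exact: ea | exact: eb].
  rewrite -e; apply/K; apply: QD; apply/K; [exact: (eq_ind_r (Pset y) Pa ea) | exact: (eq_ind_r (Pset y) Pb eb)].
- move=> a b hab Pb.
  have K c := key (C := ({poly {poly int}} : comPzRingType)) (ev2 hab) c y.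
  case: (svalP (@eta _ (@Fmap F _ _ (ev2 hab) y))) => _ [_ [QM _]].
  have ea : ev2 hab ('X%:P) = a by exact: ev2XC.
  have eb : ev2 hab 'X = b by exact: ev2X.
  have e : ev2 hab ('X%:P * 'X) = a * b by rewrite rmorphM; congr (_ * _); [exact: ea | exact: eb].
  by rewrite -e; apply/K; apply: QM; apply/K; exact: (eq_ind_r (Pset y) Pb eb).
- exists 1 => P1.
  have e : ev1 (0:R) 1 = 1 by rewrite rmorph1.
  rewrite -e in P1; move/K0: P1 => Q1.
  by apply: nr; rewrite -[r]mulr1; apply: QM0.
- move=> a b hab Pab.
  have K c := key (C := ({poly {poly int}} : comPzRingType)) (ev2 hab) c y.
  case: (svalP (@eta _ (@Fmap F _ _ (ev2 hab) y))) => _ [_ [_ [_ Qp]]].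
  have ea : ev2 hab ('X%:P) = a by exact: ev2XC.
  have eb : ev2 hab 'X = b by exact: ev2X.
  have e : ev2 hab ('X%:P * 'X) = a * b by rewrite rmorphM; congr (_ * _); [exact: ea | exact: eb].
  rewrite -e in Pab; move/K: Pab => /Qp [/K H | /K H]; [left; exact: (eq_ind _ (Pset y) H _ ea) | right; exact: (eq_ind _ (Pset y) H _ eb)].
Qed.

Definition delta (R : pzRingType) (y : Fobj F R) : dSpec R :=
  exist _ (Pset y) (Pset_prime y).

End Main.

Theorem theorem2p15 :
  forall (F : RingPsh) (eta : forall R : comPzRingType, Fobj F R -> Spec R),
    nat_to_Spec eta ->
    (exists delta : forall R : pzRingType, Fobj F R -> dSpec R,
        nat_to_dSpec delta /\ restricts_to delta eta) /\
    (forall delta1 delta2 : forall R : pzRingType, Fobj F R -> dSpec R,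
        nat_to_dSpec delta1 -> restricts_to delta1 eta ->
        nat_to_dSpec delta2 -> restricts_to delta2 eta ->
        forall (R : pzRingType) (y : Fobj F R), delta1 R y = delta2 R y).
Proof.
move=> F eta Heta; split.
  exists (delta Heta); split.
    move=> R S f y /=; apply: functional_extensionality => r.
    rewrite /Pset /preim_set.
    have E : forall p, ev1 (f r) p = f (ev1 r p).
      apply: (@poly_uniq S (ev1 (f r)) (f \o ev1 r)).
      by rewrite /= !ev1X.
    by rewrite (Fmap_comp (f := ev1 r) (g := f) (h := ev1 (f r)) E).
  move=> R y /=; apply: functional_extensionality => a.
  rewrite /Pset (Heta PI R (ev1 a) y) /preim_set.
  have H : ev1 a 'X = a := ev1X a.
  by rewrite -[X in _ = sval _ X]H.
move=> d1 d2 N1 R1 N2 R2 R y.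
have E : proj1_sig (d1 R y) = proj1_sig (d2 R y).
  apply: functional_extensionality => a.
  have H : ev1 a 'X = a := ev1X a.
  have e1 := N1 PI R (ev1 a) y; have e2 := N2 PI R (ev1 a) y.
  rewrite R1 in e1; rewrite R2 in e2.
  have f1 := congr1 (fun P => P 'X) e1; have f2 := congr1 (fun P => P 'X) e2.
  rewrite /preim_set /= in f1 f2.
  rewrite -[X in sval (d1 R y) X]H -[X in sval (d2 R y) X]H.
  exact: (etrans (esym f1) f2).
move: (d1 R y) (d2 R y) E => [P p] [Q q] /= EPQ.
by subst Q; rewrite (proof_irrelevance _ p q).
Qed.
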